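(* Let $c_{\min}\le c_{\max}$ and $d_{\min}\le d_{\max}$ be integers, $T=\{c_{\min},\dots,c_{\max}\}\times\{d_{\min},\dots,d_{\max}\}$, $a:T\to[0,1]$ and $p:T\to\mathbb{R}$. For $(c,d),(c',d')\in T$ write $(c,d)\to(c',d')$ for the inequality $p_{c,d}-c\,a_{c,d}\ge p_{c',d'}-c\,a_{c',d'}$. Assume $a$ is monotonic: $a_{c,d}\ge a_{c',d'}$ whenever $c\le c'$ and $d\ge d'$. Suppose that for every $(c,d)\in T$: $(c,d)\to(c+1,d)$ if $c<c_{\max}$; $(c,d)\to(c-1,d)$ if $c>c_{\min}$; $(c,d)\to(c,d-1)$ if $d>d_{\min}$. Then $(c,d)\to(c',d')$ holds for all $(c,d)\in T$ and all $(c',d')\in T$ with $d'\le d$.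
   Context: $a_{c,d}$ is the interim winning probability and $p_{c,d}$ the expected payment of a bidder reporting type $(c,d)$ (forwarding cost $c$, predicted path duration $d$); a bidder of true cost $c$ winning with probability $a$ has expected cost $c\,a$. The inequality $(c,d)\to(c',d')$ is the incentive-compatibility (IC) constraint for a bidder of true type $(c,d)$ misreporting $(c',d')$. In the paper, IC constraints for over-reporting the path duration ($d'>d$) are excluded from consideration by a separate argument, so ''all IC constraints'' means all constraints $(c,d)\to(c',d')$ with $d'\le d$. *)

(* Defs.v *)
From Stdlib Require Import Reals ZArith.
Open Scope R_scope.

Definition inT (cmin cmax dmin dmax c d : Z) : Prop :=
  (cmin <= c <= cmax)%Z /\ (dmin <= d <= dmax)%Z.

Definition IC (a p : Z -> Z -> R) (c d c' d' : Z) : Prop :=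
  p c d - IZR c * a c d >= p c' d' - IZR c * a c' d'.

(* Main.v *)
Require Import Defs.
From Stdlib Require Import Reals ZArith Lra Lia.
Open Scope R_scope.

Theorem theorem1 (cmin cmax dmin dmax : Z) (a p : Z -> Z -> R)
  (Hc : (cmin <= cmax)%Z) (Hd : (dmin <= dmax)%Z)
  (Ha01 : forall c d, inT cmin cmax dmin dmax c d -> 0 <= a c d <= 1)
  (Hmono : forall c d c' d', inT cmin cmax dmin dmax c d ->
     inT cmin cmax dmin dmax c' d' -> (c <= c')%Z -> (d' <= d)%Z ->
     a c d >= a c' d')
  (Hup : forall c d, inT cmin cmax dmin dmax c d -> (c < cmax)%Z ->
     IC a p c d (c + 1)%Z d)
  (Hdown : forall c d, inT cmin cmax dmin dmax c d -> (cmin < c)%Z ->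
     IC a p c d (c - 1)%Z d)
  (Hdd : forall c d, inT cmin cmax dmin dmax c d -> (dmin < d)%Z ->
     IC a p c d c (d - 1)%Z) :
  forall c d c' d', inT cmin cmax dmin dmax c d ->
    inT cmin cmax dmin dmax c' d' -> (d' <= d)%Z -> IC a p c d c' d'.
Proof.
  unfold IC in *.
  assert (Rup : forall n c d, inT cmin cmax dmin dmax c d ->
            inT cmin cmax dmin dmax (c + Z.of_nat n)%Z d ->
            p c d - IZR c * a c d >= p (c + Z.of_nat n)%Z d - IZR c * a (c + Z.of_nat n)%Z d).
  { induction n as [|n IH]; intros c d H1 H2.
    - replace (c + Z.of_nat 0)%Z with c by lia. lra.
    - set (k := (c + Z.of_nat n)%Z).
      replace (c + Z.of_nat (S n))%Z with (k + 1)%Z by (unfold k; lia).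
      assert (Hk : inT cmin cmax dmin dmax k d) by (unfold inT in *; unfold k; lia).
      assert (Hk1 : inT cmin cmax dmin dmax (k+1) d) by
        (unfold inT in *; unfold k; lia).
      specialize (IH c d H1 Hk). fold k in IH.
      assert (A1 := Hup k d Hk ltac:(unfold inT in *; unfold k; lia)).
      assert (A2 := Hmono k d (k+1)%Z d Hk Hk1 ltac:(lia) ltac:(lia)).
      assert (A3 : IZR c <= IZR k) by (apply IZR_le; unfold k; lia).
      assert (0 <= (IZR k - IZR c) * (a k d - a (k+1)%Z d)) by (apply Rmult_le_pos; lra).
      nra. }
  assert (Rdn : forall n c d, inT cmin cmax dmin dmax c d ->
            inT cmin cmax dmin dmax (c - Z.of_nat n)%Z d ->
            p c d - IZR c * a c d >= p (c - Z.of_nat n)%Z d - IZR c * a (c - Z.of_nat n)%Z d).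
  { induction n as [|n IH]; intros c d H1 H2.
    - replace (c - Z.of_nat 0)%Z with c by lia. lra.
    - set (k := (c - Z.of_nat n)%Z).
      replace (c - Z.of_nat (S n))%Z with (k - 1)%Z by (unfold k; lia).
      assert (Hk : inT cmin cmax dmin dmax k d) by (unfold inT in *; unfold k; lia).
      assert (Hk1 : inT cmin cmax dmin dmax (k-1) d) by
        (unfold inT in *; unfold k; lia).
      specialize (IH c d H1 Hk). fold k in IH.
      assert (A1 := Hdown k d Hk ltac:(unfold inT in *; unfold k; lia)).
      assert (A2 := Hmono (k-1)%Z d k d Hk1 Hk ltac:(lia) ltac:(lia)).
      assert (A3 : IZR k <= IZR c) by (apply IZR_le; unfold k; lia).
      assert (0 <= (IZR c - IZR k) * (a (k-1)%Z d - a k d)) by (apply Rmult_le_pos; lra).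
      nra. }
  assert (Col : forall n c d, inT cmin cmax dmin dmax c d ->
            inT cmin cmax dmin dmax c (d - Z.of_nat n)%Z ->
            p c d - IZR c * a c d >= p c (d - Z.of_nat n)%Z - IZR c * a c (d - Z.of_nat n)%Z).
  { induction n as [|n IH]; intros c d H1 H2.
    - replace (d - Z.of_nat 0)%Z with d by lia. lra.
    - set (k := (d - Z.of_nat n)%Z).
      replace (d - Z.of_nat (S n))%Z with (k - 1)%Z by (unfold k; lia).
      assert (Hk : inT cmin cmax dmin dmax c k) by (unfold inT in *; unfold k; lia).
      specialize (IH c d H1 Hk). fold k in IH.
      assert (A1 := Hdd c k Hk ltac:(unfold inT in *; unfold k; lia)).
      lra. }
  intros c d c' d' H1 H2 Hdd'.
  assert (Hcd' : inT cmin cmax dmin dmax c d') by (unfold inT in *; lia).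
  assert (C1 := Col (Z.to_nat (d - d')) c d H1
                  ltac:(replace (d - Z.of_nat (Z.to_nat (d - d')))%Z with d' by lia; exact Hcd')).
  replace (d - Z.of_nat (Z.to_nat (d - d')))%Z with d' in C1 by lia.
  destruct (Z.le_gt_cases c c') as [Hl|Hl].
  - assert (C2 := Rup (Z.to_nat (c' - c)) c d' Hcd'
                  ltac:(replace (c + Z.of_nat (Z.to_nat (c' - c)))%Z with c' by lia; exact H2)).
    replace (c + Z.of_nat (Z.to_nat (c' - c)))%Z with c' in C2 by lia. lra.
  - assert (C2 := Rdn (Z.to_nat (c - c')) c d' Hcd'
                  ltac:(replace (c - Z.of_nat (Z.to_nat (c - c')))%Z with c' by lia; exact H2)).
    replace (c - Z.of_nat (Z.to_nat (c - c')))%Z with c' in C2 by lia. lra.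
Qed.
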